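(* Let $R$ be an amenable affine algebra over a field $K$ with no zero divisors. Then there exist a basis $\{e_i\}_{i\ge1}$ of $R$ over $K$ and a finitely additive invariant dimension-measure on $R$ with respect to $\{e_i\}_{i\ge1}$.
   Context: An affine algebra is a finitely generated associative algebra over $K$, not necessarily unital. $R$ is amenable if there exist finite-dimensional $K$-subspaces $W_1\subseteq W_2\subseteq\cdots$ with $\bigcup_nW_n=R$ such that for every $r\in R$, $\lim_{n\to\infty}\dim_K(W_nr+W_n)/\dim_K(W_n)=1$. For $A\subseteq R$, $r\in R$, $Ar=\{ar:a\in A\}$. Subsets $B_1,\dots,B_k$ of $R$ are mutually independent if they are pairwise disjoint and their union is linearly independent over $K$. Given a basis $\{e_i\}_{i\ge1}$ of $R$, a linearly independent subset $L\subseteq R$ is regular if there are subsets $A_1,\dots,A_n$ of $\{e_i\}$ and $r_1,\dots,r_n\in R$ with $L$ the disjoint union of $A_1r_1,\dots,A_nr_n$. A finitely additive invariant dimension-measure with respect to $\{e_i\}$ is a nonnegative function $\mu$ on regular subsets with: (i) $\mu(\{e_i\}_{i\ge1})=1$ and $\mu(A)\le1$ for all regular $A$; (ii) $\mu(A\cup B)=\mu(A)+\mu(B)$ for mutually independent regular $A,B$; (iii) $\mu(Ar)=\mu(A)$ for regular $A$ and nonzero $r\in R$. *)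

(* Defs.v *)
(* Non-unital associative K-algebras are given as an
   lmodType K together with an explicit bilinear associative product. *)
From mathcomp Require Import all_boot all_order all_algebra.
From mathcomp Require Import Rstruct.
Set Implicit Arguments. Unset Strict Implicit. Unset Printing Implicit Defensive.
Import Order.TTheory GRing.Theory Num.Theory.
Local Open Scope ring_scope.

Section AlgDefs.
Variables (K : fieldType) (V : lmodType K).

Definition lin_indep (A : V -> Prop) : Prop :=
  forall (l : seq V) (c : V -> K),
    uniq l -> (forall x, x \in l -> A x) ->
    \sum_(x <- l) c x *: x = 0 -> forall x, x \in l -> c x = 0.

Definition in_span (A : V -> Prop) (v : V) : Prop :=
  exists (l : seq V) (c : V -> K),
    (forall x, x \in l -> A x) /\ v = \sum_(x <- l) c x *: x.

Definition is_basis (A : V -> Prop) : Prop :=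
  lin_indep A /\ forall v, in_span A v.

Definition has_dim (S : V -> Prop) (d : nat) : Prop :=
  exists l : seq V, [/\ uniq l, size l = d, lin_indep (fun x => x \in l) &
    forall v, S v <-> in_span (fun x => x \in l) v].

Variable mul : V -> V -> V.

Definition is_assoc_alg_mul : Prop :=
  [/\ forall a b c, mul a (mul b c) = mul (mul a b) c,
      forall a b c, mul (a + b) c = mul a c + mul b c,
      forall a b c, mul a (b + c) = mul a b + mul a c,
      forall (k : K) a b, mul (k *: a) b = k *: mul a b &
      forall (k : K) a b, mul a (k *: b) = k *: mul a b].

Definition affine_alg : Prop :=
  exists s : seq V, forall S : V -> Prop,
    (forall x, x \in s -> S x) -> S 0 ->
    (forall x y, S x -> S y -> S (x + y)) ->
    (forall (k : K) x, S x -> S (k *: x)) ->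
    (forall x y, S x -> S y -> S (mul x y)) ->
    forall v, S v.

Definition no_zero_divisors : Prop :=
  (exists v : V, v != 0) /\ forall a b, mul a b = 0 -> a = 0 \/ b = 0.

Definition transl_sum (W : V -> Prop) (r : V) : V -> Prop :=
  fun v => exists a b, [/\ W a, W b & v = mul a r + b].

Definition amenable : Prop :=
  exists W : nat -> V -> Prop,
    [/\ forall n v, W n v -> W n.+1 v,
        forall v, exists n, W n v &
        forall r, exists d e : nat -> nat,
          [/\ forall n, has_dim (W n) (d n),
              forall n, has_dim (transl_sum (W n) r) (e n) &
              forall eps : rat, 0 < eps -> exists N, forall n, (N <= n)%N ->
                `|(e n)%:R / (d n)%:R - 1| < eps]].

Definition rmul_set (A : V -> Prop) (r : V) : V -> Prop :=
  fun v => exists a, A a /\ v = mul a r.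

Definition set_union (A B : V -> Prop) : V -> Prop := fun v => A v \/ B v.

Definition regular (E : V -> Prop) (L : V -> Prop) : Prop :=
  lin_indep L /\
  exists (n : nat) (A : 'I_n -> V -> Prop) (r : 'I_n -> V),
    [/\ forall j v, A j v -> E v,
        forall v, L v <-> exists j, rmul_set (A j) (r j) v &
        forall j k, j != k -> forall v,
          ~ (rmul_set (A j) (r j) v /\ rmul_set (A k) (r k) v)].

Definition mutually_indep (A B : V -> Prop) : Prop :=
  (forall v, ~ (A v /\ B v)) /\ lin_indep (set_union A B).

(* Finitely additive invariant dimension-measure w.r.t. the basis E,
   real valued; only its values on regular subsets matter. *)
Definition dim_measure (E : V -> Prop) (mu : (V -> Prop) -> Rdefinitions.R) : Prop :=
  [/\ mu E = 1,
      forall A, regular E A -> 0 <= mu A /\ mu A <= 1,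
      forall A B, regular E A -> regular E B -> mutually_indep A B ->
        mu (set_union A B) = mu A + mu B &
      forall A r, regular E A -> r != 0 -> mu (rmul_set A r) = mu A].

End AlgDefs.

(* Main.v *)
Require Import Defs.
From mathcomp Require Import all_boot all_order all_algebra.
From mathcomp Require Import all_classical all_reals all_analysis.
From mathcomp Require Import Rstruct Rstruct_topology.
From mathcomp Require Import lra zify.
Set Implicit Arguments. Unset Strict Implicit. Unset Printing Implicit Defensive.
Import Order.TTheory GRing.Theory Num.Theory.
Import numFieldNormedType.Exports.
Local Open Scope ring_scope.
Local Open Scope classical_set_scope.
Definition in01 {R : realType} (x : nat -> R) := forall k, 0 <= x k <= 1.

Lemma ulim_exists (R : realType) : exists L : (nat -> R) -> R,
  [/\ forall x, in01 x -> 0 <= L x <= 1,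
      L (fun _ => 1) = 1,
      forall x y, in01 x -> in01 y -> L (fun k => x k + y k) = L x + L y &
      forall x y, in01 x -> in01 y ->
        (forall eps : R, 0 < eps -> exists N, forall k, (N <= k)%N -> `|x k - y k| < eps) ->
        L x = L y].
Proof.
have [U [UU sU]] := ultraFilterLemma (eventually_filter).
have UP : ProperFilter U by apply: ultra_proper.
have cvU : forall x : nat -> R, in01 x -> exists p : R, (x @ U) --> p.
  move=> x hx.
  have cpt := @segment_compact R 0 1.
  have [p [_ clp]] : `[(0:R), 1]%classic `&` cluster (fmap x U) !=set0.
    apply: cpt.
    rewrite /fmap /=. apply: (@filterS _ U _ setT); last exact: filterT. move=> k _ /=.
    by rewrite in_itv /=; exact: hx.
  exists p => N Np.
  have [//|Uc] := in_ultra_setVsetC (x @^-1` N) UU.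
  have [z [/= zc zN]] := clp (~` N) _ Uc Np.
  by case: zc.
have limE : forall (x : nat -> R) (p : R), (x @ U) --> p -> lim (x @ U) = p.
  by move=> x p h; apply: (cvg_lim (@Rhausdorff R)).
have U01 : forall (x : nat -> R) (p : R), in01 x -> (x @ U) --> p -> 0 <= p <= 1.
  move=> x p hx h.
  have : `[(0:R), 1]%classic p.
    apply: (closed_cvg _ _ _ _ h); first exact: interval_closed.
    apply: (@filterS _ U _ setT); last exact: filterT.
    by move=> k _ /=; rewrite in_itv /=; exact: hx.
  by rewrite /= in_itv.
exists (fun x => lim (x @ U)); split.
- move=> x hx; have [p hp] := cvU x hx; rewrite (limE _ _ hp); exact: U01 hx hp.
- apply: limE; exact: cvg_cst.
- move=> x y hx hy; have [p hp] := cvU x hx; have [q hq] := cvU y hy.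
  rewrite (limE _ _ hp) (limE _ _ hq); apply: limE.
  have h := (@cvgD R R^o _ U _ x y p q hp hq). exact: h.
- move=> x y hx hy hxy; have [p hp] := cvU x hx; have [q hq] := cvU y hy.
  rewrite (limE _ _ hp) (limE _ _ hq).
  have h0 : ((fun k => x k - y k) @ U) --> (0 : R).
    have h0' : ((fun k => x k - y k) @ \oo) --> (0:R).
      apply/cvgrPdist_lt => e e0; have [N hN] := hxy e e0.
      exists N => // k /= kN; rewrite sub0r normrN; exact: hN.
    move=> N N0; apply: sU; exact: (h0' N N0).
  have : ((fun k => x k - y k) @ U) --> p - q by exact: (@cvgB R R^o _ U _ x y p q hp hq).
  move=> h1; apply/eqP; rewrite -subr_eq0; apply/eqP.
  exact: (@cvg_unique _ (@Rhausdorff R) _ _ _ _ h1 h0).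
Qed.

Lemma conv_helper (R : realType) (x y : nat -> R) (Q : R) k0 :
  (forall k, (k0 <= k)%N -> `|x k - y k| * (k.+1)%:R <= Q) ->
  forall eps : R, 0 < eps -> exists N, forall k, (N <= k)%N -> `|x k - y k| < eps.
Proof.
move=> h eps e0.
have Q0 : 0 <= Q by apply: le_trans (h k0 (leqnn _)); rewrite mulr_ge0.
have hm := archi_boundP (divr_ge0 Q0 (ltW e0)).
set m := Num.Def.archi_bound (Q / eps) in hm.
exists (maxn k0 m) => k hk.
have hk0 : (k0 <= k)%N by apply: leq_trans hk; exact: leq_maxl.
have hmk : (m <= k)%N by apply: leq_trans hk; exact: leq_maxr.
rewrite -(ltr_pM2r (x := (k.+1)%:R)) ?ltr0Sn //.
apply: le_lt_trans (h k hk0) _.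
rewrite ltr_pdivrMr // in hm.
apply: lt_le_trans hm _; rewrite mulrC ler_wpM2l ?(ltW e0) // ler_nat.
exact: leq_trans hmk (leqnSn k).
Qed.
Local Close Scope classical_set_scope.
Section LinAlg.
Variables (K : fieldType) (V : lmodType K).
Implicit Types (s t : seq V) (v w : V).

Definition spanN s v := exists a : nat -> K, v = \sum_(0 <= i < size s) a i *: s`_i.
Definition freeN s := forall a : nat -> K,
  \sum_(0 <= i < size s) a i *: s`_i = 0 -> forall i, (i < size s)%N -> a i = 0.

Lemma sum_nat_delta (T : nmodType) (n j : nat) (F : nat -> T) : (j < n)%N ->
  \sum_(0 <= i < n) (if i == j then F i else 0) = F j.
Proof.
move=> hj; rewrite big_mkord (bigD1 (Ordinal hj)) //= eqxx big1 ?addr0 //.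
by move=> i; rewrite -val_eqE /= => /negbTE ->.
Qed.

Lemma spanN0 s : spanN s 0.
Proof. by exists (fun=> 0); rewrite big1 // => i _; rewrite scale0r. Qed.

Lemma spanND s v w : spanN s v -> spanN s w -> spanN s (v + w).
Proof.
move=> [a ->] [b ->]; exists (fun i => a i + b i).
by rewrite -big_split /=; apply: eq_bigr => i _; rewrite scalerDl.
Qed.

Lemma spanNZ s k v : spanN s v -> spanN s (k *: v).
Proof.
move=> [a ->]; exists (fun i => k * a i).
by rewrite scaler_sumr; apply: eq_bigr => i _; rewrite scalerA.
Qed.

Lemma spanN_mem s x : x \in s -> spanN s x.
Proof.
move=> xs; exists (fun i => if i == index x s then 1 else 0).
have hi : (index x s < size s)%N by rewrite index_mem.
rewrite -{1}(nth_index 0 xs) -(sum_nat_delta (fun i => s`_i) hi).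
by apply: eq_bigr => i _; case: ifP => _; rewrite ?scale1r ?scale0r.
Qed.

Lemma spanN_sum s n (F : nat -> V) : (forall i, (i < n)%N -> spanN s (F i)) ->
  spanN s (\sum_(0 <= i < n) F i).
Proof.
elim: n => [|n IH] h; first by rewrite big_nil; exact: spanN0.
rewrite big_nat_recr //=; apply: spanND; last exact: h.
by apply: IH => i hi; apply: h; exact: ltnW.
Qed.

Lemma spanN_trans s t v : (forall x, x \in s -> spanN t x) -> spanN s v -> spanN t v.
Proof.
move=> h [a ->]; apply: spanN_sum => i hi; apply: spanNZ; apply: h.
exact: mem_nth.
Qed.

Definition subspace (P : V -> Prop) :=
  [/\ P 0, forall x y, P x -> P y -> P (x + y) & forall k x, P x -> P (k *: x)].

Lemma subspace_sum (P : V -> Prop) n (F : nat -> V) : subspace P ->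
  (forall i, (i < n)%N -> P (F i)) -> P (\sum_(0 <= i < n) F i).
Proof.
move=> [P0 PD PZ]; elim: n => [|n IH] h; first by rewrite big_nil.
rewrite big_nat_recr //=; apply: PD; last exact: h.
by apply: IH => i hi; apply: h; exact: ltnW.
Qed.

Lemma subspace_span (P : V -> Prop) s v : subspace P ->
  (forall x, x \in s -> P x) -> spanN s v -> P v.
Proof.
move=> sP h [a ->]; apply: subspace_sum => // i hi.
by case: sP => _ _ PZ; apply: PZ; apply: h; exact: mem_nth.
Qed.

Lemma spanN_subspace s : subspace (spanN s).
Proof. split; [exact: spanN0|exact: spanND|exact: spanNZ]. Qed.

End LinAlg.
Section LinAlg2.
Variables (K : fieldType) (V : lmodType K).
Implicit Types (s t : seq V) (v w : V).

Lemma in_span_add1 (A : V -> Prop) l (c : V -> K) x k : uniq l ->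
  (forall y, y \in l -> A y) -> A x ->
  exists l' (c' : V -> K), [/\ uniq l', (forall y, y \in l' -> A y) &
    \sum_(y <- l) c y *: y + k *: x = \sum_(y <- l') c' y *: y].
Proof.
move=> ul hl Ax; case: (boolP (x \in l)) => xl.
- exists l, (fun y => if y == x then c y + k else c y); split => //.
  rewrite (bigD1_seq x) //= [in RHS](bigD1_seq x) //= eqxx scalerDl addrAC.
  by congr (_ + _); apply: eq_bigr => y /negbTE ->.
- exists (x :: l), (fun y => if y == x then k else c y); split.
  + by rewrite /= xl ul.
  + by move=> y; rewrite inE => /orP[/eqP->|/hl].
  + rewrite big_cons eqxx addrC; congr (_ + _); apply: eq_big_seq => y yl.
    by case: eqP => // yx; move: xl; rewrite -yx yl.
Qed.

Lemma in_span_canon (A : V -> Prop) l (c : V -> K) : (forall y, y \in l -> A y) ->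
  exists l' (c' : V -> K), [/\ uniq l', (forall y, y \in l' -> A y) &
    \sum_(y <- l) c y *: y = \sum_(y <- l') c' y *: y].
Proof.
elim: l => [|x l IH] hl; first by exists [::], c; rewrite big_nil.
have [l' [c' [ul' hl' e]]] := IH (fun y yl => hl y (mem_behead (s := x :: _) yl)).
have [l2 [c2 [ul2 hl2 e2]]] := in_span_add1 c' (c x) ul' hl' (hl x (mem_head _ _)).
by exists l2, c2; split => //; rewrite big_cons e addrC.
Qed.

Lemma in_span_add (A : V -> Prop) u v : in_span A u -> in_span A v -> in_span A (u + v).
Proof.
move=> [l1 [c1 [hl1 ->]]] [l2 [c2 [hl2 ->]]].
have [l [c [ul hl ->]]] := in_span_canon c1 hl1.
elim: l2 hl2 l c ul hl => [|x l2 IH] hl2 l c ul hl.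
  by exists l, c; split => //; rewrite big_nil addr0.
rewrite big_cons addrA.
have [l' [c' [ul' hl' ->]]] := in_span_add1 c (c2 x) ul hl (hl2 x (mem_head _ _)).
exact: IH (fun y yl => hl2 y (mem_behead (s := x :: _) yl)) l' c' ul' hl'.
Qed.

Lemma in_span_scale (A : V -> Prop) k v : in_span A v -> in_span A (k *: v).
Proof.
move=> [l [c [hl ->]]]; exists l, (fun y => k * c y); split => //.
by rewrite scaler_sumr; apply: eq_bigr => y _; rewrite scalerA.
Qed.

Lemma in_span0 (A : V -> Prop) : in_span A 0.
Proof. by exists [::], (fun=> 0); rewrite big_nil. Qed.

Lemma in_span_mem (A : V -> Prop) x : A x -> in_span A x.
Proof.
move=> Ax; exists [:: x], (fun=> 1); split; last by rewrite big_seq1 scale1r.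
by move=> y; rewrite inE => /eqP ->.
Qed.

Lemma in_span_subspace (A : V -> Prop) : subspace (in_span A).
Proof. split; [exact: in_span0|exact: in_span_add|exact: in_span_scale]. Qed.

Lemma in_span_sub (A P : V -> Prop) v : subspace P -> (forall x, A x -> P x) ->
  in_span A v -> P v.
Proof.
move=> [P0 PD PZ] hAP [l [c [hl ->]]]; elim: l hl => [|x l IH] hl; first by rewrite big_nil.
rewrite big_cons; apply: PD; first by apply: PZ; apply: hAP; apply: hl; exact: mem_head.
by apply: IH => y yl; apply: hl; exact: mem_behead.
Qed.

Lemma in_span_mono (A B : V -> Prop) v : (forall x, A x -> B x) -> in_span A v -> in_span B v.
Proof. move=> h; apply: in_span_sub; [exact: in_span_subspace| by move=> x /h; exact: in_span_mem]. Qed.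

Lemma spanNP s v : in_span (fun x => x \in s) v <-> spanN s v.
Proof.
split.
  by apply: in_span_sub; [exact: spanN_subspace| exact: spanN_mem].
apply: subspace_span; first exact: in_span_subspace.
exact: in_span_mem.
Qed.

Lemma lin_indep_mono (A B : V -> Prop) : (forall x, A x -> B x) -> lin_indep B -> lin_indep A.
Proof. by move=> h hB l c ul hl; apply: hB => // x /hl /h. Qed.

Lemma lin_indep_freeN s : uniq s -> lin_indep (fun x => x \in s) -> freeN s.
Proof.
move=> us hli a ha i hi.
pose c x := a (index x s).
have h0 : \sum_(x <- s) c x *: x = 0.
  rewrite -[RHS]ha (big_nth 0); apply: eq_big_nat => j /andP[_ hj].
  by rewrite /c index_uniq.
by have := hli s c us (fun x h => h) h0 (s`_i) (mem_nth 0 hi); rewrite /c index_uniq.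
Qed.

Lemma sum_delta_scale s j : (j < size s)%N ->
  \sum_(0 <= i < size s) (i == j)%:R *: s`_i = s`_j.
Proof.
move=> hj; rewrite -(sum_nat_delta (fun i => s`_i) hj).
by apply: eq_bigr => i _; case: eqP => _; rewrite ?scale1r ?scale0r.
Qed.

Lemma freeN_uniq s : freeN s -> uniq s.
Proof.
move=> hf; apply/(uniqP 0) => i j hi hj eij; apply/eqP; apply/negPn/negP => nij.
have : (i == i)%:R - (i == j)%:R = 0 :> K.
  apply: (hf (fun k => (k == i)%:R - (k == j)%:R)) => //.
  rewrite (eq_bigr (fun k => (k == i)%:R *: s`_k - (k == j)%:R *: s`_k)).
    by rewrite sumrB !sum_delta_scale // eij subrr.
  by move=> k _; rewrite scalerBl.
by rewrite eqxx (negbTE nij) subr0 => /eqP; rewrite oner_eq0.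
Qed.

Lemma freeN_lin_indep s : freeN s -> lin_indep (fun x => x \in s).
Proof.
move=> hf l c ul hl hsum x xl.
have us := freeN_uniq hf.
pose a i := if s`_i \in l then c s`_i else 0.
have ha : \sum_(0 <= i < size s) a i *: s`_i = 0.
  rewrite -[RHS]hsum (eq_bigr (fun i => (if s`_i \in l then c s`_i *: s`_i else 0))); last first.
    by move=> i _; rewrite /a; case: ifP => _ //; rewrite scale0r.
  rewrite -(big_nth 0 predT (fun y => if y \in l then c y *: y else 0)) -big_mkcond /=.
  rewrite -big_filter; apply: perm_big; apply: uniq_perm; rewrite ?filter_uniq //.
  by move=> y; rewrite mem_filter; case yl: (y \in l) => //=; rewrite hl.
have xs : x \in s by exact: hl.
have := hf a ha (index x s); rewrite index_mem => /(_ xs).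
by rewrite /a nth_index // xl.
Qed.

End LinAlg2.
Section LinAlg3.
Variables (K : fieldType) (V : lmodType K).
Implicit Types (s t : seq V) (v w : V).

Lemma sum_cat s1 s2 (a : nat -> K) :
  \sum_(0 <= i < size (s1 ++ s2)) a i *: (s1 ++ s2)`_i =
  \sum_(0 <= i < size s1) a i *: s1`_i + \sum_(0 <= j < size s2) a (j + size s1)%N *: s2`_j.
Proof.
rewrite size_cat (@big_cat_nat _ _ _ (size s1)) ?leq_addr //=; congr (_ + _).
  by apply: eq_big_nat => i /andP[_ hi]; rewrite nth_cat hi.
rewrite -{1}[size s1]add0n big_addn addKn; apply: eq_bigr => j _.
by rewrite nth_cat ltnNge leq_addl /= addnK.
Qed.

Lemma freeN_catl s1 s2 : freeN (s1 ++ s2) -> freeN s1.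
Proof.
move=> hf a ha i hi.
pose a' i := if (i < size s1)%N then a i else 0.
have h : \sum_(0 <= i < size (s1 ++ s2)) a' i *: (s1 ++ s2)`_i = 0.
  rewrite sum_cat (eq_big_nat _ _ (F2 := fun i => a i *: s1`_i)); last first.
    by move=> k /andP[_ hk]; rewrite /a' /= hk.
  rewrite ha add0r big1 // => j _; rewrite /a' /= ltnNge leq_addl /= scale0r //.
have := hf _ h i; rewrite /a' hi; apply; rewrite size_cat; exact: ltn_addr.
Qed.

Lemma freeN_catr s1 s2 : freeN (s1 ++ s2) -> freeN s2.
Proof.
move=> hf a ha i hi.
pose a' i := if (i < size s1)%N then 0 else a (i - size s1)%N.
have h : \sum_(0 <= i < size (s1 ++ s2)) a' i *: (s1 ++ s2)`_i = 0.
  rewrite sum_cat (eq_big_nat _ _ (F2 := fun=> 0)); last first.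
    by move=> k /andP[_ hk]; rewrite /a' /= hk scale0r.
  rewrite big1 // add0r -[RHS]ha; apply: eq_bigr => j _.
  by rewrite /a' /= ltnNge leq_addl /= addnK.
have := hf _ h (i + size s1)%N.
by rewrite size_cat addnC ltn_add2l hi /a' /= ltnNge leq_addr /= addKn; apply.
Qed.

Lemma freeN_cat_span s1 s2 x : freeN (s1 ++ s2) -> x \in s2 -> spanN s1 x -> False.
Proof.
move=> hf xs [b hb].
set j := index x s2.
have hj : (j < size s2)%N by rewrite index_mem.
pose a' i := if (i < size s1)%N then b i else - ((i - size s1)%N == j)%:R.
have h : \sum_(0 <= i < size (s1 ++ s2)) a' i *: (s1 ++ s2)`_i = 0.
  rewrite sum_cat (eq_big_nat _ _ (F2 := fun i => b i *: s1`_i)); last first.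
    by move=> k /andP[_ hk]; rewrite /a' /= hk.
  rewrite -hb (eq_bigr (fun k => - ((k == j)%:R *: s2`_k))); last first.
    by move=> k _; rewrite /a' /= ltnNge leq_addl /= addnK scaleNr.
  by rewrite sumrN sum_delta_scale // nth_index // subrr.
have := hf _ h (j + size s1)%N.
rewrite size_cat addnC ltn_add2l hj /a' /= ltnNge leq_addr /= addKn eqxx.
by move=> /(_ isT)/eqP; rewrite oppr_eq0 oner_eq0.
Qed.

Lemma freeN_rcons s p : freeN s -> ~ spanN s p -> freeN (rcons s p).
Proof.
move=> hf hp a ha.
rewrite -cats1 sum_cat /= big_nat1 add0n in ha.
have an : a (size s) = 0.
  apply/eqP; apply/negPn/negP => an0; apply: hp.
  have e : \sum_(0 <= i < size s) a i *: s`_i = - (a (size s) *: p).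
    by apply/eqP; rewrite -addr_eq0 ha.
  exists (fun i => - (a (size s))^-1 * a i).
  rewrite (eq_bigr (fun i => - (a (size s))^-1 *: (a i *: s`_i))); last by move=> i _; rewrite scalerA.
  by rewrite -scaler_sumr e scalerN scaleNr opprK scalerA mulVf // scale1r.
rewrite an scale0r addr0 in ha.
move=> i; rewrite size_rcons ltnS leq_eqVlt => /orP[/eqP->//|hi].
exact: hf.
Qed.

Lemma steinitz s t : freeN s -> (forall x, x \in s -> spanN t x) -> (size s <= size t)%N.
Proof.
move=> hf hs.
have [B hB] : exists B : nat -> nat -> K, forall i, (i < size s)%N ->
    s`_i = \sum_(0 <= j < size t) B i j *: t`_j.
  have : forall i, exists b : nat -> K, (i < size s)%N -> s`_i = \sum_(0 <= j < size t) b j *: t`_j.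
    move=> i; case: (boolP (i < size s)%N) => hi.
      by have [b hb] := hs _ (mem_nth 0 hi); exists b.
    by exists (fun=> 0).
  by move=> /choice [B hB]; exists B.
pose M : 'M[K]_(size s, size t) := \matrix_(i, j) B i j.
have fM : row_free M.
  rewrite -kermx_eq0; apply/eqP/row_matrixP => k; rewrite row0.
  set u := row k (kermx M).
  have uM : u *m M = 0 by apply/sub_kermxP; rewrite row_sub.
  apply/rowP => i; rewrite [RHS]mxE.
  pose a n := if (n < size s)%N then u 0 (insubd i n) else 0.
  have ins : forall j : 'I_(size s), insubd i j = j.
    by move=> j; apply: val_inj; rewrite val_insubd ltn_ord.
  have := hf a _ i (ltn_ord i); rewrite /a ltn_ord ins; apply.
  rewrite big_mkord (eq_bigr (fun i : 'I_(size s) => u 0 i *: s`_i)); last first.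
    by move=> i0 _; rewrite ltn_ord ins.
  rewrite (eq_bigr (fun i : 'I_(size s) => \sum_(j < size t) (u 0 i * M i j) *: t`_j)); last first.
    move=> i0 _; rewrite hB // big_mkord scaler_sumr; apply: eq_bigr => j _.
    by rewrite scalerA [M i0 j]mxE.
  rewrite exchange_big /= big1 // => j _; rewrite -scaler_suml.
  have : (u *m M) 0 j = 0 by rewrite uM mxE.
  by rewrite mxE => ->; rewrite scale0r.
move: fM; rewrite /row_free => /eqP <-; exact: rank_leq_col.
Qed.

Lemma extend (P : V -> Prop) g B : subspace P -> (forall x, P x -> spanN g x) ->
  freeN B -> (forall x, x \in B -> P x) ->
  exists C, [/\ forall x, x \in C -> P x, freeN (B ++ C) & forall x, P x -> spanN (B ++ C) x].
Proof.
move=> sP hg fB hB.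
pose pr m := `[< exists C, [/\ size C = m, forall x, x \in C -> P x & freeN (B ++ C)] >].
have ex0 : exists m, pr m.
  by exists 0%N; apply/asboolP; exists [::]; rewrite cats0.
have ub : forall m, pr m -> (m <= size g)%N.
  move=> m /asboolP [C [<- hC fBC]].
  apply: leq_trans (steinitz fBC _); first by rewrite size_cat leq_addl.
  move=> x; rewrite mem_cat => /orP[/hB|/hC]; exact: hg.
case: (ex_maxnP ex0 ub) => m /asboolP [C [szC hC fBC]] mx.
exists C; split => // x Px.
case: (pselect (spanN (B ++ C) x)) => // nsp.
have : pr (size (rcons C x)).
  apply/asboolP; exists (rcons C x); split => //.
    by move=> y; rewrite mem_rcons inE => /orP[/eqP->//|/hC].
  by rewrite -rcons_cat; apply: freeN_rcons.
by move/mx; rewrite size_rcons szC ltnn.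
Qed.

End LinAlg3.

Section AlgLemmas.
Variables (K : fieldType) (V : lmodType K) (mul : V -> V -> V).
Hypothesis hmul : is_assoc_alg_mul mul.
Implicit Types (s : seq V) (v w : V).

Lemma mulDl a b c : mul (a + b) c = mul a c + mul b c.
Proof. by case: hmul. Qed.
Lemma mulZl k a b : mul (k *: a) b = k *: mul a b.
Proof. by case: hmul. Qed.
Lemma mulDr a b c : mul a (b + c) = mul a b + mul a c.
Proof. by case: hmul. Qed.
Lemma mulZr k a b : mul a (k *: b) = k *: mul a b.
Proof. by case: hmul. Qed.
Lemma mulA a b c : mul a (mul b c) = mul (mul a b) c.
Proof. by case: hmul. Qed.
Lemma mul0l a : mul 0 a = 0.
Proof. by have := mulZl 0 0 a; rewrite !scale0r. Qed.
Lemma mul0r a : mul a 0 = 0.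
Proof. by have := mulZr 0 a 0; rewrite !scale0r. Qed.
Lemma mulBl a b c : mul (a - b) c = mul a c - mul b c.
Proof. by rewrite mulDl -scaleN1r mulZl scaleN1r. Qed.
Lemma mul_suml n (F : nat -> V) r :
  mul (\sum_(0 <= i < n) F i) r = \sum_(0 <= i < n) mul (F i) r.
Proof.
elim: n => [|n IH]; first by rewrite !big_nil mul0l.
by rewrite !big_nat_recr //= mulDl IH.
Qed.

Lemma freeN_map_mul s r : (forall a, mul a r = 0 -> a = 0) ->
  freeN s -> freeN (map (mul^~ r) s).
Proof.
move=> inj hf a ha i; rewrite size_map => hi; apply: hf hi.
apply: inj; rewrite mul_suml -[RHS]ha size_map; apply: eq_big_nat => j /andP[_ hj].
by rewrite mulZl (nth_map 0).
Qed.

Section Layer.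
Variables (G : V -> Prop) (g : seq V).
Hypothesis hg : freeN g.
Hypothesis hG : forall v, G v <-> spanN g v.

Definition Fset (T : seq V) w := G w /\ forall t, t \in T -> G (mul w t).

Lemma G_subspace : subspace G.
Proof.
split; first by apply/hG; exact: spanN0.
  by move=> x y /hG hx /hG hy; apply/hG; exact: spanND.
by move=> k x /hG hx; apply/hG; exact: spanNZ.
Qed.

Lemma Fset_subspace T : subspace (Fset T).
Proof.
have [G0 GD GZ] := G_subspace.
split.
- by split => // t _; rewrite mul0l.
- move=> x y [Gx hx] [Gy hy]; split; first exact: GD.
  by move=> t tT; rewrite mulDl; apply: GD; [exact: hx|exact: hy].
- move=> k x [Gx hx]; split; first exact: GZ.
  by move=> t tT; rewrite mulZl; apply: GZ; exact: hx.
Qed.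

Lemma layer (T : seq V) (h : V -> seq V)
  (hh : forall t, t \in T -> forall v, transl_sum mul G t v -> spanN (h t) v) B :
  freeN B -> (forall x, x \in B -> Fset T x) -> (forall x, Fset T x -> spanN B x) ->
  exists C, [/\ forall x, x \in C -> G x, freeN (B ++ C),
     (forall x, G x -> spanN (B ++ C) x) &
     (size C <= \sum_(t <- T) (size (h t) - size g))%N].
Proof.
elim: T hh B => [|t T IH] hh B fB hB spB.
  exists [::]; rewrite cats0; split => //.
  by move=> x Gx; apply: spB; split.
have hB' : forall x, x \in B -> Fset T x.
  by move=> x /hB [Gx hx]; split => // u uT; apply: hx; rewrite inE uT orbT.
have [C1 [hC1 fBC1 spC1]] := extend (g := g) (Fset_subspace T)
   (fun x hx => proj1 (hG x) (proj1 hx)) fB hB'.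
have hBC1 : forall x, x \in B ++ C1 -> Fset T x.
  by move=> x; rewrite mem_cat => /orP[/hB'|/hC1].
have [C2 [hC2 fC2 spC2 szC2]] := IH (fun u uT => hh u (mem_behead (s := t :: T) uT))
   _ fBC1 hBC1 spC1.
exists (C1 ++ C2); split.
- by move=> x; rewrite mem_cat => /orP[/hC1 []|/hC2].
- by rewrite catA.
- by rewrite catA.
rewrite big_cons size_cat.
suff : (size g + size C1 <= size (h t))%N by lia.
have [G0 GD GZ] := G_subspace.
rewrite -(size_map (mul^~ t) C1) -size_cat; apply: steinitz; last first.
  move=> x; rewrite mem_cat => /orP[xg|/mapP [c cC1 ->]].
    apply: (hh t (mem_head _ _)); exists 0, x; split => //; last by rewrite mul0l add0r.
    by apply/hG; exact: spanN_mem.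
  apply: (hh t (mem_head _ _)); exists c, 0; split => //.
  - by case: (hC1 c cC1).
  - by rewrite addr0.
move=> a ha.
rewrite sum_cat size_map in ha.
pose w := \sum_(0 <= j < size C1) a (j + size g)%N *: C1`_j.
have ew : mul w t = \sum_(0 <= j < size C1) a (j + size g)%N *: (map (mul^~ t) C1)`_j.
  rewrite mul_suml; apply: eq_big_nat => j /andP[_ hj].
  by rewrite mulZl (nth_map 0).
have Gwt : G (mul w t).
  have -> : mul w t = - \sum_(0 <= i < size g) a i *: g`_i.
    by apply/eqP; rewrite -addr_eq0 ew addrC ha.
  by rewrite -scaleN1r; apply: GZ; apply/hG; exists a.
have Fw : Fset (t :: T) w.
  have [Fw1 Fw2] : Fset T w.
    apply: subspace_sum; first exact: Fset_subspace.
    move=> j hj; case: (Fset_subspace T) => _ _ FZ; apply: FZ; apply: hC1.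
    exact: mem_nth.
  split => // u; rewrite inE => /orP[/eqP->//|]; exact: Fw2.
have [b hb] := spB w Fw.
have a2 : forall j, (j < size C1)%N -> a (j + size g)%N = 0.
  pose a' i := if (i < size B)%N then - b i else a (i - size B + size g)%N.
  have h0 : \sum_(0 <= i < size (B ++ C1)) a' i *: (B ++ C1)`_i = 0.
    rewrite sum_cat (eq_big_nat _ _ (F2 := fun i => - (b i *: B`_i))); last first.
      by move=> k /andP[_ hk]; rewrite /a' /= hk scaleNr.
    rewrite sumrN -hb (eq_bigr (fun j => a (j + size g)%N *: C1`_j)) ?addNr //.
    move=> j _; rewrite /a' /= ifN ?addnK //; lia.
  move=> j hj; have := fBC1 _ h0 (j + size B)%N.
  rewrite /a' /= ifN; last lia.
  by rewrite addnK size_cat addnC ltn_add2l hj; apply.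
have wt0 : mul w t = 0.
  rewrite ew (eq_big_nat _ _ (F2 := fun=> 0)) ?big1 // => j /andP[_ hj].
  by rewrite a2 ?scale0r //; move: hj; rewrite size_map.
move: ha; rewrite -ew wt0 addr0 => ha'.
move=> i; rewrite size_cat size_map => hi.
case: (ltnP i (size g)) => hig; first exact: hg ha' i hig.
have -> : i = ((i - size g) + size g)%N by rewrite subnK.
apply: a2; rewrite ltn_subLR //; lia.
Qed.


End Layer.
End AlgLemmas.
Section Main.
Variables (K : fieldType) (V : lmodType K) (mul : V -> V -> V).
Hypothesis hmul : is_assoc_alg_mul mul.
Hypothesis hdom : forall a b, mul a b = 0 -> a = 0 \/ b = 0.
Variable W : nat -> V -> Prop.
Hypothesis hWinc : forall n v, W n v -> W n.+1 v.
Hypothesis hWex : forall v, exists n, W n v.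
Variables (bW : nat -> seq V) (hT : V -> nat -> seq V).
Hypothesis hbW_free : forall n, freeN (bW n).
Hypothesis hbW : forall n v, W n v <-> spanN (bW n) v.
Hypothesis hT_span : forall r n v, transl_sum mul (W n) r v -> spanN (hT r n) v.
Hypothesis hamen : forall r M, (0 < M)%N -> exists N, forall n, (N <= n)%N ->
  (M * (size (hT r n) - size (bW n)) < size (bW n))%N.

Lemma Wmono n m v : (n <= m)%N -> W n v -> W m v.
Proof.
move=> /subnK <-; elim: (m - n)%N => [|j IH] // h.
by rewrite addSn; apply: hWinc; exact: IH.
Qed.

Lemma W_subspace n : subspace (W n).
Proof. exact: (G_subspace (hbW n)). Qed.

Definition Tk k := flatten [seq bW i | i <- iota 0 k.+1].

Lemma Tk_mono k k' : (k <= k')%N -> forall t, t \in Tk k -> t \in Tk k'.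
Proof.
move=> hk t; rewrite /Tk => /flattenP [l /mapP [i hi ->] ti].
apply/flattenP; exists (bW i) => //; apply/mapP; exists i => //.
by move: hi; rewrite !mem_iota !add0n => /andP[_ hi]; apply: leq_trans hi _.
Qed.

Lemma Tk_span v : exists k, spanN (Tk k) v.
Proof.
have [n /hbW hn] := hWex v; exists n; apply: spanN_trans hn => x xb.
apply: spanN_mem; apply/flattenP; exists (bW n) => //; apply/mapP; exists n => //.
by rewrite mem_iota add0n ltnSn.
Qed.

Lemma ev_all (A : eqType) (s : seq A) (P : A -> nat -> Prop) :
  (forall y, y \in s -> exists N, forall n, (N <= n)%N -> P y n) ->
  exists N, forall n, (N <= n)%N -> forall y, y \in s -> P y n.
Proof.
elim: s => [|a s IH] h; first by exists 0%N.
have [N1 h1] := h a (mem_head _ _).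
have [N2 h2] := IH (fun y ys => h y (mem_behead (s := a :: s) ys)).
exists (maxn N1 N2) => n hn y; rewrite inE => /orP[/eqP->|ys].
  by apply: h1; apply: leq_trans hn; exact: leq_maxl.
by apply: h2 => //; apply: leq_trans hn; exact: leq_maxr.
Qed.

Lemma sum_le_const (s : seq V) (f : V -> nat) c :
  (forall t, t \in s -> (f t <= c)%N) -> (\sum_(t <- s) f t <= size s * c)%N.
Proof.
elim: s => [|a s IH] h; first by rewrite big_nil.
rewrite big_cons /= mulSn leq_add //; first exact: h (mem_head _ _).
by apply: IH => t ts; apply: h; exact: (mem_behead (s := a :: s) ts).
Qed.

Lemma muln_sum (s : seq V) (f : V -> nat) m :
  (m * \sum_(t <- s) f t = \sum_(t <- s) m * f t)%N.
Proof.
elim: s => [|a s IH]; first by rewrite !big_nil muln0.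
by rewrite !big_cons mulnDr IH.
Qed.

Definition bad n (s : V) (E : seq V) := count (fun x => ~~ `[< W n (mul x s) >]) E.

Definition Inv k (p : nat * seq V) :=
  [/\ freeN p.2, (forall v, W p.1 v <-> spanN p.2 v), (0 < size p.2)%N, (k <= p.1)%N &
      forall t, t \in Tk k -> (k.+1 * bad p.1 t p.2 <= size p.2)%N].

Lemma basis_size n E : freeN E -> (forall v, W n v <-> spanN E v) -> size E = size (bW n).
Proof.
move=> fE hE; apply/eqP; rewrite eqn_leq; apply/andP; split.
  by apply: (steinitz fE) => x xE; apply/hbW/hE; exact: spanN_mem.
by apply: (steinitz (@hbW_free n)) => x xb; apply/hE/hbW; exact: spanN_mem.
Qed.

Lemma Inv0 : exists p, Inv 0 p.
Proof.
have [N hN] := hamen 0 (ltnSn 0).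
exists (N, bW N); split => //=.
- by have := hN N (leqnn N); rewrite mul1n; apply: leq_ltn_trans.
- by move=> t _; rewrite mul1n count_size.
Qed.

Lemma step k p : Inv k p -> exists q, [/\ Inv k.+1 q, (p.1 < q.1)%N & exists C, q.2 = p.2 ++ C].
Proof.
case: p => n E [/= fE spE szE kn hbad].
set T := Tk k.+1.
set M := (k.+2 * (size T).+1)%N.
have [N1 h1] : exists N, forall n', (N <= n')%N -> forall t, t \in T ->
    (M * (size (hT t n') - size (bW n')) < size (bW n'))%N.
  by apply: ev_all => t _; apply: hamen; rewrite muln_gt0.
have [N2 h2] : exists N, forall n', (N <= n')%N -> forall x, x \in E -> forall t, t \in T ->
    W n' (mul x t).
  apply: ev_all => x _; apply: ev_all => t _.
  have [m hm] := hWex (mul x t); exists m => n' hn'; exact: Wmono hn' hm.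
have [N3 h3] := hamen 0 (ltnSn 0).
set n' := maxn (maxn N1 N2) (maxn N3 n.+1).
have hN1 : (N1 <= n')%N by rewrite /n' !leq_max leqnn.
have hN2 : (N2 <= n')%N by rewrite /n' !leq_max leqnn orbT.
have hN3 : (N3 <= n')%N by rewrite /n' !leq_max leqnn !orbT.
have hnn : (n < n')%N by rewrite /n' !leq_max leqnn !orbT.
have hG := hbW n'.
have sG := W_subspace n'.
have EF : forall x, x \in E -> Fset mul (W n') T x.
  move=> x xE; split; last exact: h2.
  by apply: Wmono (ltnW hnn) _; apply/spE; exact: spanN_mem.
have [C0 [hC0 fEC0 spC0]] := extend (g := bW n') (Fset_subspace hmul hG T)
   (fun x hx => proj1 (hG x) (proj1 hx)) fE EF.
have hBC : forall x, x \in E ++ C0 -> Fset mul (W n') T x.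
  by move=> x; rewrite mem_cat => /orP[/EF|/hC0].
have [C [hC fC spC szC]] := layer hmul (@hbW_free n') hG
   (h := fun t => hT t n') (fun t _ v hv => hT_span hv) fEC0 hBC spC0.
set E' := (E ++ C0) ++ C.
have inG : forall x, x \in E' -> W n' x.
  move=> x; rewrite !mem_cat => /orP[/orP[/EF []|/hC0 []]|/hC] //.
have spE' : forall v, W n' v <-> spanN E' v.
  move=> v; split; first exact: spC.
  exact: subspace_span sG inG.
have szE' := basis_size fC spE'.
exists (n', E'); split => //=.
- split => //=; first by rewrite szE'; have := h3 n' hN3; rewrite mul1n; apply: leq_ltn_trans.
    by apply: leq_trans hnn.
  move=> t tT.
  have b0 : bad n' t (E ++ C0) = 0%N.
    apply/eqP; rewrite -leqn0 -(count_pred0 (E ++ C0)) leq_eqVlt; apply/orP; left; apply/eqP.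
    apply: eq_in_count => x hx /=; apply/negbF/asboolP.
    by move: hx; rewrite mem_cat => /orP[/EF [_ ]|/hC0 [_]]; apply.
  rewrite /bad count_cat -/(bad n' t (E ++ C0)) b0 add0n szE'.
  apply: leq_trans (leq_mul (leqnn _) (count_size _ _)) _.
  apply: leq_trans (leq_mul (leqnn _) szC) _.
  have hx : forall t, t \in T -> (M * (size (hT t n') - size (bW n')) <= size (bW n'))%N.
    by move=> u uT; apply: ltnW; apply: h1.
  rewrite -(@leq_pmul2l (size T).+1) //.
  rewrite mulnA [((size T).+1 * _)%N]mulnC -/M muln_sum.
  apply: leq_trans (sum_le_const hx) _.
  by rewrite leq_mul2r leqnSn orbT.
- by exists (C0 ++ C); rewrite /E' catA.
Qed.


Lemma stages : exists st : nat -> nat * seq V, forall k,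
  [/\ Inv k (st k), ((st k).1 < (st k.+1).1)%N & exists C, (st k.+1).2 = (st k).2 ++ C].
Proof.
have [p0 h0] := Inv0.
have : forall kp : nat * (nat * seq V), exists q, Inv kp.1 kp.2 ->
    [/\ Inv kp.1.+1 q, (kp.2.1 < q.1)%N & exists C, q.2 = kp.2.2 ++ C].
  move=> [k p]; case: (pselect (Inv k p)) => hp; last by exists p.
  by have [q hq] := step hp; exists q.
move=> /choice [f hf].
pose st := fix st k := if k is k'.+1 then f (k', st k') else p0.
have hI : forall k, Inv k (st k).
  by elim => [|k IH] //=; have [] := hf (k, st k) IH.
by exists st => k; have [] := hf (k, st k) (hI k).
Qed.

Section Stages.
Variable st : nat -> nat * seq V.
Hypothesis hst : forall k,
  [/\ Inv k (st k), ((st k).1 < (st k.+1).1)%N & exists C, (st k.+1).2 = (st k).2 ++ C].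
Local Notation nk k := (st k).1.
Local Notation Ek k := (st k).2.

Lemma Ek_prefix k k' : (k <= k')%N -> exists C, Ek k' = Ek k ++ C.
Proof.
move=> /subnK <-; elim: (k' - k)%N => [|j [C IH]]; first by exists [::]; rewrite cats0.
have [_ _ [C' ->]] := hst (j + k); rewrite IH -catA; by exists (C ++ C').
Qed.

Lemma Ek_mono k k' x : (k <= k')%N -> x \in Ek k -> x \in Ek k'.
Proof. by move=> /Ek_prefix [C ->] xE; rewrite mem_cat xE. Qed.

Lemma nk_mono k k' : (k <= k')%N -> (nk k <= nk k')%N.
Proof.
move=> /subnK <-; elim: (k' - k)%N => [|j IH] //.
have [_ h _] := hst (j + k); rewrite addSn; apply: leq_trans IH (ltnW h).
Qed.

Definition Eall v := exists k, v \in Ek k.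

Lemma Ek_free k : freeN (Ek k). Proof. by have [[]] := hst k. Qed.
Lemma Ek_span k v : W (nk k) v <-> spanN (Ek k) v. Proof. by have [[]] := hst k. Qed.
Lemma Ek_pos k : (0 < size (Ek k))%N. Proof. by have [[]] := hst k. Qed.
Lemma Ek_ge k : (k <= nk k)%N. Proof. by have [[]] := hst k. Qed.
Lemma Ek_bad k t : t \in Tk k -> (k.+1 * bad (nk k) t (Ek k) <= size (Ek k))%N.
Proof. by move=> ht; have [[_ _ _ _ h] _ _] := hst k; exact: h. Qed.
Lemma Ek_W k x : x \in Ek k -> W (nk k) x.
Proof. by move=> xE; apply/Ek_span; exact: spanN_mem. Qed.

Lemma Eall_W k v : Eall v -> W (nk k) v -> v \in Ek k.
Proof.
move=> [k' vk'] Wv; case: (leqP k' k) => hk; first exact: Ek_mono vk'.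
have [C eC] := Ek_prefix (ltnW hk).
move: vk'; rewrite eC mem_cat => /orP[//|vC].
have := @Ek_free k'; rewrite eC => hf.
by case: (freeN_cat_span hf vC (proj1 (Ek_span k v) Wv)).
Qed.

Lemma common_stage (l : seq V) : (forall x, x \in l -> Eall x) ->
  exists k, forall x, x \in l -> x \in Ek k.
Proof.
elim: l => [|a l IH] h; first by exists 0%N.
have [k1 h1] := h a (mem_head _ _).
have [k2 h2] := IH (fun y yl => h y (mem_behead (s := a :: l) yl)).
exists (maxn k1 k2) => x; rewrite inE => /orP[/eqP->|xl].
  by apply: Ek_mono h1; exact: leq_maxl.
by apply: Ek_mono (h2 x xl); exact: leq_maxr.
Qed.

Lemma Eall_basis : is_basis Eall.
Proof.
split.
  move=> l c ul hl hs x xl.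
  have [k hk] := common_stage hl.
  exact: (freeN_lin_indep (@Ek_free k)) l c ul hk hs x xl.
move=> v; have [m Wm] := hWex v.
have Wv : W (nk m) v by apply: Wmono Wm; exact: Ek_ge.
have /spanNP := proj1 (Ek_span m v) Wv.
by apply: in_span_mono => x xE; exists m.
Qed.

Definition enum_ok k (L : V -> Prop) (s : seq V) :=
  uniq s /\ forall x, x \in s <-> L x /\ W (nk k) x.

Definition cnt k (L : V -> Prop) := size (xget [::] (enum_ok k L)).

Lemma small_size k (L : V -> Prop) s : lin_indep L -> uniq s ->
  (forall x, x \in s -> L x /\ W (nk k) x) -> (size s <= size (Ek k))%N.
Proof.
move=> hL us hs; apply: (steinitz (lin_indep_freeN us _)).
  by apply: lin_indep_mono hL => x /hs [].
by move=> x /hs [_ /Ek_span].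
Qed.

Lemma enum_exists k L : lin_indep L -> exists s, enum_ok k L s.
Proof.
move=> hL.
pose pr m := `[< exists s, [/\ size s = m, uniq s & forall x, x \in s -> L x /\ W (nk k) x] >].
have ex0 : exists m, pr m by exists 0%N; apply/asboolP; exists [::].
have ub : forall m, pr m -> (m <= size (Ek k))%N.
  by move=> m /asboolP [s [<- us hs]]; exact: small_size hL us hs.
case: (ex_maxnP ex0 ub) => m /asboolP [s [szs us hs]] mx.
exists s; split => // x; split; first exact: hs.
move=> hx; case: (boolP (x \in s)) => // xs.
have : pr (size (x :: s)).
  apply/asboolP; exists (x :: s); split => //=; first by rewrite xs.
  by move=> y; rewrite inE => /orP[/eqP->|/hs].
by move/mx; rewrite /= szs ltnn.
Qed.

Lemma cnt_ok k L : lin_indep L -> enum_ok k L (xget [::] (enum_ok k L)).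
Proof. by move=> hL; apply: xgetPex; exact: enum_exists. Qed.

Lemma cnt_eq k L s : lin_indep L -> enum_ok k L s -> cnt k L = size s.
Proof.
move=> hL [us hs]; have [ue he] := cnt_ok k hL.
apply: perm_size; apply: uniq_perm => // x.
by apply/idP/idP => [/he /hs|/hs /he].
Qed.

Lemma cnt_ge k L s : lin_indep L -> uniq s ->
  (forall x, x \in s -> L x /\ W (nk k) x) -> (size s <= cnt k L)%N.
Proof.
move=> hL us hs; have [ue he] := cnt_ok k hL.
by apply: uniq_leq_size => // x /hs /he.
Qed.

Lemma cnt_le k L : lin_indep L -> (cnt k L <= size (Ek k))%N.
Proof.
move=> hL; have [ue he] := cnt_ok k hL.
by apply: small_size hL ue _ => x /he.
Qed.

Lemma cnt_union k A B : lin_indep (set_union A B) -> (forall v, ~ (A v /\ B v)) ->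
  cnt k (set_union A B) = (cnt k A + cnt k B)%N.
Proof.
move=> hAB dAB.
have hA : lin_indep A by apply: lin_indep_mono hAB => x hx; left.
have hB : lin_indep B by apply: lin_indep_mono hAB => x hx; right.
have [uA eA] := cnt_ok k hA; have [uB eB] := cnt_ok k hB.
rewrite /cnt -size_cat; apply: cnt_eq => //; split.
  rewrite cat_uniq uA uB andbT /=; apply/hasPn => x /eB [Bx _]; apply/negP => /eA [Ax _].
  exact: dAB (conj Ax Bx).
move=> x; rewrite mem_cat; split.
  by move=> /orP[/eA [? ?]|/eB [? ?]]; split => //; [left|right].
by move=> [[Ax|Bx] Wx]; apply/orP; [left; apply/eA|right; apply/eB].
Qed.

Lemma cnt_Eall k : cnt k Eall = size (Ek k).
Proof.
apply: cnt_eq; first by case: Eall_basis.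
split; first exact: freeN_uniq (@Ek_free k).
move=> x; split; first by move=> xE; split; [exists k|exact: Ek_W].
by move=> [hx Wx]; exact: Eall_W.
Qed.

Lemma cnt0 k (L : V -> Prop) : (forall v, ~ L v) -> cnt k L = 0%N.
Proof.
move=> hL; have li : lin_indep L.
  by move=> l c _ hl _ x /hl /hL.
by rewrite (@cnt_eq k L [::]) //; split => // x; split => // [[/hL]].
Qed.

End Stages.

Lemma rinj s : s != 0 -> forall a, mul a s = 0 -> a = 0.
Proof. by move=> s0 a /hdom [//|/eqP]; rewrite (negbTE s0). Qed.

Lemma rinj2 s : (forall a, mul a s = 0 -> a = 0) -> forall a b, mul a s = mul b s -> a = b.
Proof.
move=> h a b e; apply/eqP; rewrite -subr_eq0; apply/eqP; apply: h.
by rewrite mulBl // e subrr.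
Qed.

Lemma mul_sumlseq (l : seq V) (F : V -> V) s :
  mul (\sum_(x <- l) F x) s = \sum_(x <- l) mul (F x) s.
Proof.
elim: l => [|x l IH]; first by rewrite !big_nil mul0l.
by rewrite !big_cons mulDl // IH.
Qed.

Lemma mul_sumr n (F : nat -> V) x :
  mul x (\sum_(0 <= i < n) F i) = \sum_(0 <= i < n) mul x (F i).
Proof.
elim: n => [|n IH]; first by rewrite !big_nil mul0r.
by rewrite !big_nat_recr //= mulDr // IH.
Qed.

Lemma lin_indep_rmul (L : V -> Prop) s : (forall a, mul a s = 0 -> a = 0) ->
  lin_indep L -> lin_indep (rmul_set mul L s).
Proof.
move=> hs hL l c ul hl hsum x xl.
have [f hf] : exists f : V -> V, forall x, rmul_set mul L s x -> L (f x) /\ x = mul (f x) s.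
  have : forall x, exists a, rmul_set mul L s x -> L a /\ x = mul a s.
    move=> y; case: (pselect (rmul_set mul L s y)) => [[a ha]|n]; first by exists a.
    by exists 0.
  by move=> /choice [f hf]; exists f.
have finj : {in l &, injective f}.
  move=> y z yl zl e.
  by rewrite (proj2 (hf y (hl y yl))) (proj2 (hf z (hl z zl))) e.
have ul' : uniq (map f l) by rewrite map_inj_in_uniq.
have hl' : forall a, a \in map f l -> L a.
  by move=> a /mapP [y yl ->]; exact: (proj1 (hf y (hl y yl))).
have h0 : \sum_(a <- map f l) c (mul a s) *: a = 0.
  apply: hs; rewrite mul_sumlseq big_map -[RHS]hsum; apply: eq_big_seq => y yl.
  by rewrite mulZl // -(proj2 (hf y (hl y yl))).
have := hL _ _ ul' hl' h0 (f x) (map_f f xl).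
by rewrite -(proj2 (hf x (hl x xl))).
Qed.

Lemma count_le_sum (E T : seq V) (p : pred V) (q : V -> pred V) :
  (forall x, p x -> exists2 t, t \in T & q t x) ->
  (count p E <= \sum_(t <- T) count (q t) E)%N.
Proof.
move=> h; elim: E => [|x E IH] /=; first by rewrite big1.
rewrite (eq_bigr (fun t => q t x + count (q t) E)%N) // big_split /= leq_add //.
case: (boolP (p x)) => // /h [t tT qt].
elim: T tT {h IH} => [|u T IHT] //; rewrite inE big_cons => /orP[/eqP<-|tT].
  by rewrite qt.
by apply: leq_trans (IHT tT) _; rewrite leq_addl.
Qed.

Section Stages2.
Variable st : nat -> nat * seq V.
Hypothesis hst : forall k,
  [/\ Inv k (st k), ((st k).1 < (st k.+1).1)%N & exists C, (st k.+1).2 = (st k).2 ++ C].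
Local Notation nk k := (st k).1.
Local Notation Ek k := (st k).2.
Local Notation cnt := (cnt st).
Local Notation Eall := (Eall st).

Lemma Eall_indep : lin_indep Eall.
Proof. by case: (Eall_basis hst). Qed.

Lemma mul_bound k (A : V -> Prop) s : (forall a, mul a s = 0 -> a = 0) ->
  (forall v, A v -> Eall v) ->
  (cnt k A <= cnt k (rmul_set mul A s) + bad (nk k) s (Ek k))%N.
Proof.
move=> hs hAE.
have hA : lin_indep A by apply: lin_indep_mono Eall_indep.
have hAs := lin_indep_rmul hs hA.
have [uA eA] := cnt_ok hst k hA.
set sA := xget [::] (enum_ok st k A) in uA eA *.
pose good := [seq mul x s | x <- sA & `[< W (nk k) (mul x s) >]].
have g1 : (size good <= cnt k (rmul_set mul A s))%N.
  apply: cnt_ge => //.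
    rewrite map_inj_in_uniq ?filter_uniq //.
    by move=> y z _ _; exact: rinj2.
  move=> y /mapP [x]; rewrite mem_filter => /andP[/asboolP Wx /eA [Ax _]] ->.
  by split => //; exists x.
have g2 : (count (predC (fun x => `[< W (nk k) (mul x s) >])) sA <= bad (nk k) s (Ek k))%N.
  rewrite /bad -!size_filter; apply: uniq_leq_size; first exact: filter_uniq.
  move=> x; rewrite !mem_filter => /andP[nb /eA [Ax Wx]]; apply/andP; split; first exact: nb.
  exact: (Eall_W hst (hAE x Ax) Wx).
have : cnt k A = size sA by [].
rewrite -(count_predC (fun x => `[< W (nk k) (mul x s) >])) => ->.
apply: leq_add g2; apply: leq_trans g1.
by rewrite size_map size_filter.
Qed.

Lemma mul_bound2 k (A : V -> Prop) s : (forall a, mul a s = 0 -> a = 0) ->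
  (forall v, A v -> Eall v) ->
  (cnt k (rmul_set mul A s) <= cnt k A + bad (nk k) s (Ek k))%N.
Proof.
move=> hs hAE.
pose B v := Eall v /\ ~ A v.
have hBE : forall v, B v -> Eall v by move=> v [].
have hEs := lin_indep_rmul hs Eall_indep.
have hU : lin_indep (set_union (rmul_set mul A s) (rmul_set mul B s)).
  apply: lin_indep_mono hEs => v [[a [Aa ->]]|[a [[Ea _] ->]]]; exists a; split => //.
  exact: hAE.
have dU : forall v, ~ (rmul_set mul A s v /\ rmul_set mul B s v).
  move=> v [[a [Aa ->]] [b [[_ nBb] e]]].
  by apply: nBb; rewrite -(rinj2 hs e).
have c1 := cnt_union hst k hU dU.
have c2 := cnt_le hst k hU.
have hAB : lin_indep (set_union A B).
  by apply: lin_indep_mono Eall_indep => v [/hAE|[]].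
have dAB : forall v, ~ (A v /\ B v) by move=> v [Av [_ nAv]].
have c3 := cnt_union hst k hAB dAB.
have c4 : cnt k (set_union A B) = size (Ek k).
  apply: cnt_eq => //; split; first exact: freeN_uniq (@Ek_free st hst k).
  move=> x; split.
    move=> xE; split; last exact: (Ek_W hst xE).
    case: (pselect (A x)) => [Ax|nAx]; [left|right] => //.
    by split => //; exists k.
  by move=> [hx Wx]; apply: (Eall_W hst _ Wx); case: hx => [/hAE|[]].
have c5 := mul_bound k hs hBE.
lia.
Qed.

Lemma bad_sub k s k0 : (k0 <= k)%N -> spanN (Tk k0) s ->
  (bad (nk k) s (Ek k) <= \sum_(t <- Tk k0) bad (nk k) t (Ek k))%N.
Proof.
move=> hk [a ->]; apply: count_le_sum => x /= /negP hx.
case: (pselect (exists2 t, t \in Tk k0 & ~~ `[< W (nk k) (mul x t) >])) => // hn.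
exfalso; apply: hx; apply/asboolP; rewrite mul_sumr.
apply: subspace_sum; first exact: W_subspace.
move=> i hi; rewrite mulZr //; case: (W_subspace (nk k)) => _ _ WZ; apply: WZ.
case: (pselect (W (nk k) (mul x (Tk k0)`_i))) => // nW; exfalso; apply: hn.
by exists (Tk k0)`_i; [exact: mem_nth | apply/asboolP].
Qed.

Lemma bad_small (ss : seq V) : exists k0 M, forall k, (k0 <= k)%N -> forall s, s \in ss ->
  (k.+1 * bad (nk k) s (Ek k) <= M * size (Ek k))%N.
Proof.
elim: ss => [|s ss [k1 [M1 IH]]]; first by exists 0%N, 0%N.
have [k0 hk0] := Tk_span s.
exists (maxn k0 k1), (maxn (size (Tk k0)) M1) => k hk y; rewrite inE => /orP[/eqP->|ys].
  apply: leq_trans (leq_mul (leqnn _) (bad_sub _ hk0)) _; first by apply: leq_trans hk; exact: leq_maxl.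
  rewrite muln_sum; apply: leq_trans (sum_le_const (c := size (Ek k)) _) _.
    move=> t tT; apply: (Ek_bad hst); apply: Tk_mono tT.
    by apply: leq_trans hk; exact: leq_maxl.
  by rewrite leq_mul2r leq_maxl orbT.
apply: leq_trans (IH k _ y ys) _; first by apply: leq_trans hk; exact: leq_maxr.
by rewrite leq_mul2r leq_maxr orbT.
Qed.

Lemma cnt_ext k (L L' : V -> Prop) : (forall v, L v <-> L' v) -> cnt k L = cnt k L'.
Proof. by move=> h; have -> : L = L' by apply: funext => v; apply: propext. Qed.

Lemma cnt_bigunion k n (P : 'I_n -> V -> Prop) (L : V -> Prop) : lin_indep L ->
  (forall v, L v <-> exists j, P j v) ->
  (forall j j', j != j' -> forall v, ~ (P j v /\ P j' v)) ->
  cnt k L = (\sum_(j < n) cnt k (P j))%N.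
Proof.
move=> hL eL dP.
pose Q m v := exists j : 'I_n, (j < m)%N /\ P j v.
have hQ : forall m, (m <= n)%N -> cnt k (Q m) = (\sum_(j < n | (j < m)%N) cnt k (P j))%N.
  elim => [|m IH] hm.
    rewrite (cnt0 hst); last by move=> v [j []].
    by rewrite big_pred0 // => j; rewrite ltn0.
  pose jm := Ordinal hm.
  rewrite (bigD1 jm) //=.
  rewrite (eq_bigl (fun j : 'I_n => (j < m)%N)); last first.
    move=> j; rewrite ltnS -val_eqE /= andbC; case: ltngtP => //= ->.
  rewrite -IH ?(ltnW hm) // addnC.
  rewrite -(cnt_union hst).
  - apply: cnt_ext => v; split.
      move=> [j [hj Pj]]; rewrite ltnS leq_eqVlt in hj.
      case/orP: hj => [/eqP ej|hj]; [right|left; exists j].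
        by have -> : jm = j by apply: val_inj; rewrite /= ej.
      by [].
    by move=> [[j [hj Pj]]|Pm]; [exists j; split => //; exact: ltnW | exists jm].
  - apply: lin_indep_mono hL => v [[j [_ Pj]]|Pm]; apply/eL; [exists j|exists jm] => //.
  - move=> v [[j [hj Pj]] Pm]; apply: (dP j jm) (conj Pj Pm).
    by rewrite -val_eqE /= neq_ltn hj.
rewrite (cnt_ext k (L' := Q n)); last first.
  move=> v; rewrite eL; split; move=> [j hj]; exists j => //.
  by case: hj.
rewrite hQ //; apply: eq_bigl => j; exact: ltn_ord.
Qed.

End Stages2.

Section Stages3.
Variable st : nat -> nat * seq V.
Hypothesis hst : forall k,
  [/\ Inv k (st k), ((st k).1 < (st k.+1).1)%N & exists C, (st k.+1).2 = (st k).2 ++ C].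
Local Notation nk k := (st k).1.
Local Notation Ek k := (st k).2.

Lemma measure_exists : exists mu : (V -> Prop) -> Rdefinitions.R, dim_measure mul (Eall st) mu.
Proof.
have [Lam [L01 L1 LD Lc]] := ulim_exists Rdefinitions.R.
pose D k : Rdefinitions.R := (size (Ek k))%:R.
have D0 : forall k, 0 < D k by move=> k; rewrite /D ltr0n; exact: (Ek_pos hst).
pose x (L : V -> Prop) k := (cnt st k L)%:R / D k.
have x01 : forall L, lin_indep L -> in01 (x L).
  move=> L hL k; rewrite /x divr_ge0 ?ler0n //= ler_pdivrMr // mul1r ler_nat.
  exact: (cnt_le hst k hL).
exists (fun L => Lam (x L)); split.
- have -> : x (Eall st) = fun=> 1.
    by apply: funext => k; rewrite /x (cnt_Eall hst) divff // gt_eqF ?D0.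
  exact: L1.
- by move=> A [hA _]; have /andP[] := L01 _ (x01 A hA).
- move=> A B [hA _] [hB _] [dAB hAB].
  have -> : x (set_union A B) = fun k => x A k + x B k.
    by apply: funext => k; rewrite /x (cnt_union hst) // natrD mulrDl.
  exact: LD (x01 A hA) (x01 B hB).
move=> A r [hA [n [Aj [rj [hAj eA dA]]]]] r0.
have rI := rinj r0.
have hAr := lin_indep_rmul rI hA.
apply: Lc (x01 _ hAr) (x01 _ hA) _.
have e1 : forall k, cnt st k A = (\sum_(j < n) cnt st k (rmul_set mul (Aj j) (rj j)))%N.
  by move=> k; apply: (cnt_bigunion hst) hA eA dA.
have e2 : forall k, cnt st k (rmul_set mul A r) =
    (\sum_(j < n) cnt st k (rmul_set mul (Aj j) (mul (rj j) r)))%N.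
  move=> k; apply: (cnt_bigunion hst) hAr _ _.
  + move=> v; split.
    * move=> [a [Aa ->]]; have [j [b [Ab ->]]] := proj1 (eA a) Aa.
      by exists j, b; split => //; rewrite mulA.
    * move=> [j [b [Ab ->]]]; exists (mul b (rj j)); split; last by rewrite mulA.
      by apply/eA; exists j, b.
  + move=> j j' njj' v [[b [Ab eb]] [b' [Ab' eb']]].
    apply: (dA j j' njj' (mul b (rj j))); split; first by exists b.
    exists b'; split => //; apply: (rinj2 rI).
    by rewrite -!mulA // -eb -eb'.
pose B k := (\sum_(j < n) (bad (nk k) (rj j) (Ek k) + bad (nk k) (mul (rj j) r) (Ek k)))%N.
have hj : forall k (j : 'I_n),
   (cnt st k (rmul_set mul (Aj j) (mul (rj j) r)) <= cnt st k (rmul_set mul (Aj j) (rj j))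
      + (bad (nk k) (rj j) (Ek k) + bad (nk k) (mul (rj j) r) (Ek k)))%N /\
   (cnt st k (rmul_set mul (Aj j) (rj j)) <= cnt st k (rmul_set mul (Aj j) (mul (rj j) r))
      + (bad (nk k) (rj j) (Ek k) + bad (nk k) (mul (rj j) r) (Ek k)))%N.
  move=> k j.
  case: (eqVneq (rj j) 0) => [rj0|rjn0].
    have emp : forall v, ~ Aj j v.
      move=> v Av; have A0 : A 0 by apply/eA; exists j, v; rewrite rj0 mul0r.
      have h0l : forall y, y \in [:: 0] -> A y by move=> y; rewrite inE => /eqP ->.
      have hs0 : \sum_(y <- [:: (0 : V)]) (1 : K) *: y = 0 by rewrite big_seq1 scaler0.
      have := hA [:: 0] (fun=> 1) isT h0l hs0 0 (mem_head _ _).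
      by move/eqP; rewrite oner_eq0.
    rewrite !(cnt0 hst) //; move=> v [a [Aa _]]; exact: emp Aa.
  have s2n0 : mul (rj j) r != 0.
    by apply/eqP => /hdom [/eqP|/eqP]; rewrite ?(negbTE rjn0) ?(negbTE r0).
  have hAjE : forall v, Aj j v -> Eall st v := hAj j.
  have := mul_bound hst k (rinj rjn0) hAjE; have := mul_bound2 hst k (rinj rjn0) hAjE.
  have := mul_bound hst k (rinj s2n0) hAjE; have := mul_bound2 hst k (rinj s2n0) hAjE.
  lia.
have S1 : forall k, (cnt st k (rmul_set mul A r) <= cnt st k A + B k)%N.
  move=> k; rewrite e1 e2 /B -big_split /=; apply: leq_sum => j _; exact: (hj k j).1.
have S2 : forall k, (cnt st k A <= cnt st k (rmul_set mul A r) + B k)%N.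
  move=> k; rewrite e1 e2 /B -big_split /=; apply: leq_sum => j _; exact: (hj k j).2.
have [k0 [M hM]] := bad_small hst ([seq rj j | j <- enum 'I_n] ++ [seq mul (rj j) r | j <- enum 'I_n]).
have hB : forall k, (k0 <= k)%N -> (k.+1 * B k <= n * (M + M) * size (Ek k))%N.
  move=> k hk; rewrite /B big_distrr /=.
  apply: leq_trans (@leq_sum _ _ _ _ (fun _ => ((M + M) * size (Ek k))%N) _) _.
    move=> j _; rewrite mulnDr mulnDl leq_add //; apply: hM => //; rewrite mem_cat; apply/orP;
      [left|right]; apply/mapP; exists j => //; by rewrite mem_enum.
  by rewrite big_const_ord iter_addn_0 mulnC mulnA.
apply: (conv_helper (Q := (n * (M + M))%:R) (k0 := k0)) => k hk.
rewrite /x -mulrBl normrM (ger0_norm (x := (D k)^-1)); last by rewrite invr_ge0 ltW.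
rewrite mulrAC ler_pdivrMr //.
have hd : `|(cnt st k (rmul_set mul A r))%:R - (cnt st k A)%:R| <= (B k)%:R :> Rdefinitions.R.
  have h1 : (cnt st k A)%:R <= (cnt st k (rmul_set mul A r))%:R + (B k)%:R :> Rdefinitions.R.
    by rewrite -natrD ler_nat; exact: S2.
  have h2 : (cnt st k (rmul_set mul A r))%:R <= (cnt st k A)%:R + (B k)%:R :> Rdefinitions.R.
    by rewrite -natrD ler_nat; exact: S1.
  rewrite ler_norml; apply/andP; split; lra.
apply: le_trans (ler_wpM2r (ler0n _ _) hd) _.
by rewrite -!natrM ler_nat mulnC; exact: hB.
Qed.

End Stages3.
End Main.

Lemma rat_bound (d e M : nat) : (0 < M)%N ->
  `|(e%:R / d%:R : rat) - 1| < (M%:R)^-1 -> (M * (e - d) < d)%N.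
Proof.
move=> M0 h.
have Mp : 0 < M%:R :> rat by rewrite ltr0n.
have d0 : (0 < d)%N.
  rewrite lt0n; apply/negP => /eqP d0; move: h; rewrite d0 invr0 mulr0 sub0r normrN normr1.
  rewrite invf_gt1 // -[1]/(1%:R) ltr_nat ltnNge.
  by rewrite M0.
case: (leqP e d) => hed.
  have -> : (e - d = 0)%N by apply/eqP; rewrite subn_eq0.
  by rewrite muln0.
have dp : 0 < d%:R :> rat by rewrite ltr0n.
have hx : e%:R / d%:R - 1 < (M%:R)^-1 := le_lt_trans (ler_norm _) h.
have hed' : (d <= e)%N := ltnW hed.
rewrite -(ltr_nat rat) natrM (natrB _ hed').
have -> : e%:R - d%:R = (e%:R / d%:R - 1) * d%:R :> rat.
  by rewrite mulrBl divfK ?mul1r // gt_eqF.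
have h1 : M%:R * (e%:R / d%:R - 1) < M%:R * (M%:R)^-1 :> rat by rewrite ltr_pM2l.
rewrite mulfV ?gt_eqF // in h1.
by rewrite mulrA -[X in _ < X]mul1r ltr_pM2r.
Qed.

Unset Implicit Arguments.

Theorem proposition1 (K : fieldType) (V : lmodType K) (mul : V -> V -> V) :
  is_assoc_alg_mul mul -> affine_alg mul -> amenable mul ->
  no_zero_divisors mul ->
  exists (E : V -> Prop) (mu : (V -> Prop) -> Rdefinitions.R),
    is_basis E /\ dim_measure mul E mu.
Proof.
move=> hmul _ [W [hWinc hWex hWr]] [_ hdom].
have hasdimP : forall (S : V -> Prop) d, has_dim S d ->
    exists l, [/\ freeN l, size l = d & forall v, S v <-> spanN l v].
  move=> S d [l [ul sl li hS]]; exists l; split => //; first exact: lin_indep_freeN.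
  by move=> v; split => [/hS/spanNP|/spanNP/hS].
have [d0 [e0 [hd0 _ _]]] := hWr 0.
have [bW hbW] : exists bW : nat -> seq V,
    forall n, freeN (bW n) /\ forall v, W n v <-> spanN (bW n) v.
  have : forall n, exists l, freeN l /\ forall v, W n v <-> spanN l v.
    by move=> n; have [l [fl _ hl]] := hasdimP _ _ (hd0 n); exists l.
  by move=> /choice [f hf]; exists f.
have hbW_free : forall n, freeN (bW n) by move=> n; case: (hbW n).
have hbW_span : forall n v, W n v <-> spanN (bW n) v by move=> n; case: (hbW n).
have sz_unique : forall n l, freeN l -> (forall v, W n v <-> spanN l v) -> size l = size (bW n).
  move=> n l fl hl; apply/eqP; rewrite eqn_leq; apply/andP; split.
    by apply: (steinitz fl) => x xl; apply/hbW_span/hl; exact: spanN_mem.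
  by apply: (steinitz (hbW_free n)) => x xb; apply/hl/hbW_span; exact: spanN_mem.
have [hT hhT] : exists hT : V -> nat -> seq V, forall r,
    (forall n v, transl_sum mul (W n) r v -> spanN (hT r n) v) /\
    forall M, (0 < M)%N -> exists N, forall n, (N <= n)%N ->
      (M * (size (hT r n) - size (bW n)) < size (bW n))%N.
  have : forall r, exists f : nat -> seq V,
    (forall n v, transl_sum mul (W n) r v -> spanN (f n) v) /\
    forall M, (0 < M)%N -> exists N, forall n, (N <= n)%N ->
      (M * (size (f n) - size (bW n)) < size (bW n))%N.
    move=> r; have [dr [er [hdr her hc]]] := hWr r.
    have : forall n, exists l, [/\ freeN l, size l = er n &
        forall v, transl_sum mul (W n) r v <-> spanN l v].
      by move=> n; exact: hasdimP _ _ (her n).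
    move=> /choice [f hf]; exists f; split.
      by move=> n v hv; have [_ _ h] := hf n; exact/h.
    move=> M M0.
    have Mp : 0 < (M%:R)^-1 :> rat by rewrite invr_gt0 ltr0n.
    have [N hN] := hc ((M%:R)^-1) Mp.
    exists N => n hn.
    have [l [fl sl hl]] := hasdimP _ _ (hdr n).
    have e1 : size (bW n) = dr n by rewrite -sl; symmetry; exact: sz_unique fl hl.
    have [_ sf _] := hf n.
    by rewrite e1 sf; exact: rat_bound M0 (hN n hn).
  by move=> /choice [f hf]; exists f.
have hT_span : forall r n v, transl_sum mul (W n) r v -> spanN (hT r n) v.
  by move=> r; case: (hhT r).
have hamen : forall r M, (0 < M)%N -> exists N, forall n, (N <= n)%N ->
    (M * (size (hT r n) - size (bW n)) < size (bW n))%N.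
  by move=> r; case: (hhT r).
have [st hst] := stages hmul hWinc hWex hbW_free hbW_span hT_span hamen.
have [mu hmu] := measure_exists hmul hdom hWinc hWex hbW_span hst.
by exists (Eall st), mu; split => //; exact: (Eall_basis hWinc hWex hst).
Qed.
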